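(* Let $X,Y$ be compact metric spaces, $\epsilon\ge0$, and let $X_\epsilon\subseteq X$, $Y_\epsilon\subseteq Y$ be $\epsilon$-nets of $X$ and $Y$ respectively. Then $|d_{\mathrm{GH}}(X,Y)-d_{\mathrm{GH}}(X_\epsilon,Y_\epsilon)|\le\epsilon$ and $|\widehat{d}_{\mathrm{GH}}(X,Y)-\widehat{d}_{\mathrm{GH}}(X_\epsilon,Y_\epsilon)|\le\epsilon$.
   Context: $X_\epsilon\subseteq X$ is an $\epsilon$-net of $X$ if every point of $X$ is within distance $\le\epsilon$ of some point of $X_\epsilon$ (the nets are taken so that they are compact, e.g. finite). For $f:X\to Y$, $\operatorname{dis}(f)=\sup_{x,x'}|d_X(x,x')-d_Y(f(x),f(x'))|$; $\operatorname{codis}(f,g)=\sup_{x,y}|d_X(x,g(y))-d_Y(f(x),y)|$. $d_{\mathrm{GH}}$ is the Gromov--Hausdorff distance, equal to $\frac12\inf_{f,g}\max\{\operatorname{dis}(f),\operatorname{dis}(g),\operatorname{codis}(f,g)\}$; the modified Gromov--Hausdorff distance is $\widehat{d}_{\mathrm{GH}}(X,Y)=\frac12\max\{\inf_{f:X\to Y}\operatorname{dis}(f),\inf_{g:Y\to X}\operatorname{dis}(g)\}$. *)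

(* Defs.v *)
From mathcomp Require Import all_boot all_order all_algebra.
From mathcomp Require Import all_classical all_reals.
From Stdlib Require List.
Set Implicit Arguments. Unset Strict Implicit. Unset Printing Implicit Defensive.
Import Order.TTheory GRing.Theory Num.Theory.
Local Open Scope classical_set_scope.
Local Open Scope ring_scope.

Definition is_metric {R : realType} {X : Type} (d : X -> X -> R) : Prop :=
  [/\ (forall x y, 0 <= d x y),
      (forall x y, d x y = 0 <-> x = y),
      (forall x y, d x y = d y x) &
      (forall x y z, d x z <= d x y + d y z)].

Definition metric_open {R : realType} {X : Type} (d : X -> X -> R) (U : set X) : Prop :=
  forall x, U x -> exists2 r : R, 0 < r & forall y, d x y < r -> U y.

Definition metric_compact {R : realType} {X : Type} (d : X -> X -> R) : Prop :=
  forall (I : Type) (U : I -> set X),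
    (forall i, metric_open d (U i)) -> (forall x, exists i, U i x) ->
    exists l : list I, forall x, exists i, List.In i l /\ U i x.

Definition subspace {X : Type} (A : set X) : Type := {x : X | A x}.
Definition sub_dist {R : realType} {X : Type} (d : X -> X -> R) (A : set X)
  (p q : subspace A) : R := d (proj1_sig p) (proj1_sig q).
Arguments sub_dist {R X} d A p q.

Definition is_eps_net {R : realType} {X : Type} (d : X -> X -> R) (eps : R)
  (A : set X) : Prop :=
  forall x, exists2 a, A a & d x a <= eps.

Definition dis {R : realType} {X Y : Type} (dX : X -> X -> R) (dY : Y -> Y -> R)
  (f : X -> Y) : R :=
  sup [set r | exists x x', r = `|dX x x' - dY (f x) (f x')|].

Definition codis {R : realType} {X Y : Type} (dX : X -> X -> R) (dY : Y -> Y -> R)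
  (f : X -> Y) (g : Y -> X) : R :=
  sup [set r | exists x y, r = `|dX x (g y) - dY (f x) y|].

(* Gromov--Hausdorff distance, via the distortion formula *)
Definition dGH {R : realType} {X Y : Type} (dX : X -> X -> R) (dY : Y -> Y -> R) : R :=
  2^-1 * inf [set r | exists (f : X -> Y) (g : Y -> X),
                 r = Num.max (dis dX dY f) (Num.max (dis dY dX g) (codis dX dY f g))].

Definition mdGH {R : realType} {X Y : Type} (dX : X -> X -> R) (dY : Y -> Y -> R) : R :=
  2^-1 * Num.max (inf [set r | exists f : X -> Y, r = dis dX dY f])
                 (inf [set r | exists g : Y -> X, r = dis dY dX g]).

(* Main.v *)
Require Import Defs.
From mathcomp Require Import all_boot all_order all_algebra.
From mathcomp Require Import all_classical all_reals.
From mathcomp Require Import lra.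
From Stdlib Require List.
Import Order.TTheory GRing.Theory Num.Theory.
Local Open Scope classical_set_scope.
Local Open Scope ring_scope.
Set Implicit Arguments. Unset Strict Implicit.

Definition bnd {R : realType} {A : Type} (d : A -> A -> R) (M : R) :=
  forall x y, 0 <= d x y /\ d x y <= M.

Lemma sup2_ub (R : realType) (T U : Type) (H : T -> U -> R) M :
  (forall x y, H x y <= M) ->
  forall x y, H x y <= sup [set r | exists x y, r = H x y].
Proof.
move=> hM x y; apply: ub_le_sup; last by exists x, y.
by exists M => _ [a [b ->]]; exact: hM.
Qed.

Lemma sup2_le (R : realType) (T U : Type) (H : T -> U -> R) c (x0 : T) (y0 : U) :
  (forall x y, H x y <= c) -> sup [set r | exists x y, r = H x y] <= c.
Proof.
move=> hc; apply: ge_sup; first by exists (H x0 y0), x0, y0.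
by move=> _ [a [b ->]].
Qed.

Lemma normB_bnd (R : realType) (a b MA MB : R) :
  0 <= a /\ a <= MA -> 0 <= b /\ b <= MB -> `|a - b| <= MA + MB.
Proof. move=> [? ?] [? ?]; rewrite ler_norml; apply/andP; split; lra. Qed.

Lemma norm3 (R : realType) (u v u' v' a b c : R) :
  `|u - u'| <= a -> `|u' - v'| <= b -> `|v - v'| <= c -> `|u - v| <= b + (a + c).
Proof.
rewrite !ler_norml => /andP[? ?] /andP[? ?] /andP[? ?].
apply/andP; split; lra.
Qed.

Lemma dis_comp (R : realType) (A A' B B' : Type) (dA : A -> A -> R) (dA' : A' -> A' -> R)
  (dB : B -> B -> R) (dB' : B' -> B' -> R) MA' MB'
  (p : A -> A') (f : A' -> B') (q : B' -> B) e1 e2 (a0 : A) :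
  bnd dA' MA' -> bnd dB' MB' ->
  (forall a1 a2, `|dA a1 a2 - dA' (p a1) (p a2)| <= e1) ->
  (forall b1 b2, `|dB (q b1) (q b2) - dB' b1 b2| <= e2) ->
  dis dA dB (fun a => q (f (p a))) <= dis dA' dB' f + (e1 + e2).
Proof.
move=> bA bB hp hq; rewrite /dis.
apply: (@sup2_le _ _ _ (fun x x' => `|dA x x' - dB (q (f (p x))) (q (f (p x')))|) _ a0 a0).
move=> x y.
have h := @sup2_ub _ _ _ (fun x x' => `|dA' x x' - dB' (f x) (f x')|) (MA' + MB')
  (fun x y => normB_bnd (bA x y) (bB (f x) (f y))) (p x) (p y).
apply: norm3 (hp x y) h (hq _ _).
Qed.

Lemma codis_comp (R : realType) (A A' B B' : Type) (dA : A -> A -> R) (dA' : A' -> A' -> R)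
  (dB : B -> B -> R) (dB' : B' -> B' -> R) MA' MB'
  (p : A -> A') (p' : A' -> A) (q : B' -> B) (q' : B -> B') f g e1 e2 (a0 : A) (b0 : B) :
  bnd dA' MA' -> bnd dB' MB' ->
  (forall a a', `|dA a (p' a') - dA' (p a) a'| <= e1) ->
  (forall b' b, `|dB (q b') b - dB' b' (q' b)| <= e2) ->
  codis dA dB (fun a => q (f (p a))) (fun b => p' (g (q' b))) <= codis dA' dB' f g + (e1 + e2).
Proof.
move=> bA bB hp hq; rewrite /codis.
apply: (@sup2_le _ _ _ (fun x y => `|dA x (p' (g (q' y))) - dB (q (f (p x))) y|) _ a0 b0).
move=> x y.
have h := @sup2_ub _ _ _ (fun x y => `|dA' x (g y) - dB' (f x) y|) (MA' + MB')
  (fun x y => normB_bnd (bA x (g y)) (bB (f x) y)) (p x) (q' y).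
apply: norm3 (hp _ _) h (hq _ _).
Qed.

Lemma dis_ge0 (R : realType) (A B : Type) (dA : A -> A -> R) (dB : B -> B -> R) MA MB
  (f : A -> B) (a0 : A) : bnd dA MA -> bnd dB MB -> 0 <= dis dA dB f.
Proof.
move=> bA bB; apply: le_trans (normr_ge0 (dA a0 a0 - dB (f a0) (f a0))) _.
exact: (@sup2_ub _ _ _ (fun x x' => `|dA x x' - dB (f x) (f x')|) (MA + MB)
  (fun x y => normB_bnd (bA x y) (bB (f x) (f y))) a0 a0).
Qed.

Lemma inf_shift (R : realType) (S1 S2 : set R) c : S1 !=set0 ->
  (forall r, S2 r -> 0 <= r) ->
  (forall r, S1 r -> exists2 s, S2 s & s <= r + c) -> inf S2 <= inf S1 + c.
Proof.
move=> ne h0 h; rewrite -lerBlDr; apply: lb_le_inf => // r S1r.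
case: (h r S1r) => s S2s le; rewrite lerBlDr; apply: le_trans le.
by apply: ge_inf => //; exists 0 => t /h0.
Qed.

Lemma maxle (R : realType) (a b a' b' k : R) :
  a <= a' + k -> b <= b' + k -> Num.max a b <= Num.max a' b' + k.
Proof.
move=> ha hb; rewrite ge_max; apply/andP; split.
  by apply: le_trans ha _; rewrite lerD2r le_max lexx.
by apply: le_trans hb _; rewrite lerD2r le_max lexx orbT.
Qed.

Lemma four_pt (R : realType) (A : Type) (d : A -> A -> R) : is_metric d ->
  forall x y x' y', `|d x y - d x' y'| <= d x x' + d y y'.
Proof.
case=> h0 hz hs ht x y x' y'.
have := ht x x' y; have := ht x' y' y; have := ht x' x y'; have := ht x y y'.
rewrite (hs y' y) (hs x x') => *.
rewrite ler_norml; apply/andP; split; lra.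
Qed.

Lemma metric_bnd (R : realType) (X : Type) (d : X -> X -> R) :
  is_metric d -> metric_compact d -> inhabited X -> exists M, bnd d M.
Proof.
move=> hm hc [x0]; have [h0 hz hs ht] := hm.
have [l hl] : exists l : list X, forall x, exists i, List.In i l /\ d i x < 1.
  apply: (hc X (fun c => [set y | d c y < 1])).
    move=> c y /= hy; exists (1 - d c y); first lra.
    move=> z hz'; have := ht c y z; lra.
  by move=> x; exists x => /=; rewrite (proj2 (hz x x) erefl); lra.
have [K hK] : exists K, forall c, List.In c l -> d x0 c <= K.
  elim: l {hl} => [|a l [K hK]]; first by exists 0.
  exists (Num.max (d x0 a) K) => c [<-|/hK]; rewrite le_max ?lexx //.
  by move=> ->; rewrite orbT.
exists (2 * K + 2) => x y; split => //.
have [c [lc hc']] := hl x; have [c' [lc' hc'']] := hl y.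
have := hK c lc; have := hK c' lc'; move: hc' hc''; rewrite /= => *.
have := ht x c y; have := ht c x0 y; have := ht x0 c' y.
rewrite (hs x c) (hs c x0); lra.
Qed.

Lemma d_self (R : realType) (A : Type) (d : A -> A -> R) : is_metric d -> forall x, d x x = 0.
Proof. by case=> _ hz _ _ x; apply/(proj2 (hz x x)). Qed.

Lemma d_sym (R : realType) (A : Type) (d : A -> A -> R) : is_metric d -> forall x y, d x y = d y x.
Proof. by case. Qed.

Unset Implicit Arguments.

Theorem claim2 (R : realType)
  (X : Type) (dX : X -> X -> R) (Y : Type) (dY : Y -> Y -> R)
  (hX : is_metric dX) (hY : is_metric dY)
  (cX : metric_compact dX) (cY : metric_compact dY)
  (neX : inhabited X) (neY : inhabited Y)
  (eps : R) (heps : 0 <= eps)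
  (Xe : set X) (Ye : set Y)
  (netX : is_eps_net dX eps Xe) (netY : is_eps_net dY eps Ye)
  (cXe : metric_compact (sub_dist dX Xe)) (cYe : metric_compact (sub_dist dY Ye)) :
  `| dGH dX dY - dGH (sub_dist dX Xe) (sub_dist dY Ye) | <= eps /\
  `| mdGH dX dY - mdGH (sub_dist dX Xe) (sub_dist dY Ye) | <= eps.
Proof.
have [MX bX] := metric_bnd hX cX neX.
have [MY bY] := metric_bnd hY cY neY.
have bXe : bnd (sub_dist dX Xe) MX by move=> a b; exact: bX.
have bYe : bnd (sub_dist dY Ye) MY by move=> a b; exact: bY.
case: neX => x0; case: neY => y0.
have piX : forall x, {a : subspace Xe | dX x (proj1_sig a) <= eps}.
  by move=> x; apply: cid; case: (netX x) => a Xa h; exists (exist _ a Xa).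
have piY : forall y, {a : subspace Ye | dY y (proj1_sig a) <= eps}.
  by move=> y; apply: cid; case: (netY y) => a Ya h; exists (exist _ a Ya).
pose pX x := proj1_sig (piX x). pose pY y := proj1_sig (piY y).
have hpX : forall x, dX x (proj1_sig (pX x)) <= eps := fun x => proj2_sig (piX x).
have hpY : forall y, dY y (proj1_sig (pY y)) <= eps := fun y => proj2_sig (piY y).
pose xe0 := pX x0. pose ye0 := pY y0.
have sX := d_self hX. have sY := d_self hY.
have yX := d_sym hX. have yY := d_sym hY.
have D1X : forall f : subspace Xe -> subspace Ye,
    dis dX dY (fun a => proj1_sig (f (pX a))) <= dis (sub_dist dX Xe) (sub_dist dY Ye) f + (eps + eps).
  move=> f; rewrite -[eps + eps]addr0.
  apply: (dis_comp _ x0 bXe bYe) => [a1 a2|b1 b2]; last by rewrite /sub_dist subrr normr0.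
  by apply: le_trans (four_pt hX _ _ _ _) _; apply: lerD.
have D1Y : forall g : subspace Ye -> subspace Xe,
    dis dY dX (fun b => proj1_sig (g (pY b))) <= dis (sub_dist dY Ye) (sub_dist dX Xe) g + (eps + eps).
  move=> g; rewrite -[eps + eps]addr0.
  apply: (dis_comp _ y0 bYe bXe) => [a1 a2|b1 b2]; last by rewrite /sub_dist subrr normr0.
  by apply: le_trans (four_pt hY _ _ _ _) _; apply: lerD.
have C1 : forall f g, codis dX dY (fun a => proj1_sig (f (pX a))) (fun b => proj1_sig (g (pY b)))
    <= codis (sub_dist dX Xe) (sub_dist dY Ye) f g + (eps + eps).
  move=> f g; apply: (codis_comp _ _ x0 y0 bXe bYe) => [a a'|b' b];
    apply: le_trans (four_pt _ _ _ _ _) _ => //; rewrite /sub_dist ?sX ?sY.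
    by rewrite addr0.
  by rewrite add0r.
have D2X : forall F : X -> Y,
    dis (sub_dist dX Xe) (sub_dist dY Ye) (fun a => pY (F (proj1_sig a))) <= dis dX dY F + (eps + eps).
  move=> F; rewrite -[eps + eps]add0r.
  apply: (dis_comp _ xe0 bX bY) => [a1 a2|b1 b2]; first by rewrite /sub_dist subrr normr0.
  apply: le_trans (four_pt hY _ _ _ _) _; rewrite /sub_dist.
  by apply: lerD; rewrite yY.
have D2Y : forall G : Y -> X,
    dis (sub_dist dY Ye) (sub_dist dX Xe) (fun b => pX (G (proj1_sig b))) <= dis dY dX G + (eps + eps).
  move=> G; rewrite -[eps + eps]add0r.
  apply: (dis_comp _ ye0 bY bX) => [a1 a2|b1 b2]; first by rewrite /sub_dist subrr normr0.
  apply: le_trans (four_pt hX _ _ _ _) _; rewrite /sub_dist.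
  by apply: lerD; rewrite yX.
have C2 : forall F G, codis (sub_dist dX Xe) (sub_dist dY Ye)
    (fun a => pY (F (proj1_sig a))) (fun b => pX (G (proj1_sig b)))
    <= codis dX dY F G + (eps + eps).
  move=> F G; apply: (codis_comp _ _ xe0 ye0 bX bY) => [a a'|b' b];
    rewrite /sub_dist; apply: le_trans (four_pt _ _ _ _ _) _ => //; rewrite ?sX ?sY.
    by rewrite add0r yX.
  by rewrite addr0 yY.
have n1 := fun F => dis_ge0 F x0 bX bY.
have n2 := fun G => dis_ge0 G y0 bY bX.
have n3 := fun f => dis_ge0 f xe0 bXe bYe.
have n4 := fun g => dis_ge0 g ye0 bYe bXe.
have I1 : inf [set r | exists (f : X -> Y) (g : Y -> X),
                 r = Num.max (dis dX dY f) (Num.max (dis dY dX g) (codis dX dY f g))]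
  <= inf [set r | exists (f : subspace Xe -> subspace Ye) (g : subspace Ye -> subspace Xe),
                 r = Num.max (dis (sub_dist dX Xe) (sub_dist dY Ye) f)
                   (Num.max (dis (sub_dist dY Ye) (sub_dist dX Xe) g)
                      (codis (sub_dist dX Xe) (sub_dist dY Ye) f g))] + (eps + eps).
  apply: inf_shift.
  - by eexists; exists (fun _ => ye0), (fun _ => xe0).
  - by move=> _ [F [G ->]]; apply: le_trans (n1 F) _; rewrite le_max lexx.
  move=> _ [f [g ->]]; eexists.
    by exists (fun a => proj1_sig (f (pX a))), (fun b => proj1_sig (g (pY b))).
  by apply: maxle; [exact: D1X | apply: maxle; [exact: D1Y | exact: C1]].
have I2 : inf [set r | exists (f : subspace Xe -> subspace Ye) (g : subspace Ye -> subspace Xe),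
                 r = Num.max (dis (sub_dist dX Xe) (sub_dist dY Ye) f)
                   (Num.max (dis (sub_dist dY Ye) (sub_dist dX Xe) g)
                      (codis (sub_dist dX Xe) (sub_dist dY Ye) f g))]
  <= inf [set r | exists (f : X -> Y) (g : Y -> X),
                 r = Num.max (dis dX dY f) (Num.max (dis dY dX g) (codis dX dY f g))] + (eps + eps).
  apply: inf_shift.
  - by eexists; exists (fun _ => y0), (fun _ => x0).
  - by move=> _ [F [G ->]]; apply: le_trans (n3 F) _; rewrite le_max lexx.
  move=> _ [f [g ->]]; eexists.
    by exists (fun a => pY (f (proj1_sig a))), (fun b => pX (g (proj1_sig b))).
  by apply: maxle; [exact: D2X | apply: maxle; [exact: D2Y | exact: C2]].
have J1 : inf [set r | exists f : X -> Y, r = dis dX dY f]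
  <= inf [set r | exists f : subspace Xe -> subspace Ye, r = dis (sub_dist dX Xe) (sub_dist dY Ye) f]
     + (eps + eps).
  apply: inf_shift.
  - by eexists; exists (fun _ => ye0).
  - by move=> _ [F ->].
  by move=> _ [f ->]; eexists; [exists (fun a => proj1_sig (f (pX a))) | exact: D1X].
have J2 : inf [set r | exists f : subspace Xe -> subspace Ye, r = dis (sub_dist dX Xe) (sub_dist dY Ye) f]
  <= inf [set r | exists f : X -> Y, r = dis dX dY f] + (eps + eps).
  apply: inf_shift.
  - by eexists; exists (fun _ => y0).
  - by move=> _ [F ->].
  by move=> _ [f ->]; eexists; [exists (fun a => pY (f (proj1_sig a))) | exact: D2X].
have K1 : inf [set r | exists f : Y -> X, r = dis dY dX f]
  <= inf [set r | exists f : subspace Ye -> subspace Xe, r = dis (sub_dist dY Ye) (sub_dist dX Xe) f]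
     + (eps + eps).
  apply: inf_shift.
  - by eexists; exists (fun _ => xe0).
  - by move=> _ [F ->].
  by move=> _ [f ->]; eexists; [exists (fun a => proj1_sig (f (pY a))) | exact: D1Y].
have K2 : inf [set r | exists f : subspace Ye -> subspace Xe, r = dis (sub_dist dY Ye) (sub_dist dX Xe) f]
  <= inf [set r | exists f : Y -> X, r = dis dY dX f] + (eps + eps).
  apply: inf_shift.
  - by eexists; exists (fun _ => x0).
  - by move=> _ [F ->].
  by move=> _ [f ->]; eexists; [exists (fun a => pX (f (proj1_sig a))) | exact: D2Y].
have M1 := maxle J1 K1. have M2 := maxle J2 K2.
rewrite /dGH /mdGH !ler_norml; split; apply/andP; split; lra.
Qed.
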